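(* Let $(X_1,X_2)$ be an extensible pair and $k\ge1$ with $\det Z_k\neq0$. Then $P(Z_k)/Q(Z_k)$ is a cyclic group. Moreover, if $u,v$ are any two adjacent nodes of $Z_k$ both lying in $B_k:=N(A_k)\cup\{\xi_1,\xi_2\}$, then the class $[\omega_u-\omega_v]$ generates $P(Z_k)/Q(Z_k)$.
   Context: A marked Dynkin diagram $(X,\xi)$ is the Dynkin diagram of a symmetrizable generalized Cartan matrix $C(X)$ with a distinguished node $\xi$; $\det X:=\det C(X)$; $X(-1)$ is $X$ with $\xi$ and incident edges deleted ($\det$ of the empty diagram is $1$); $\Delta_X=\det X-\det X(-1)$, $\Delta_i:=\Delta_{X_i}$. $(X_1,X_2)$ is an extensible pair if $\det X_i\ne0$, $\Delta_i\ne0$, $\gcd(\det X_i,\Delta_i)=1$ ($i=1,2$) and $\gcd(\Delta_1,\Delta_2)=1$. $Z_k=Z_k(X_1,X_2)$ is obtained from the disjoint union of $X_1$, a path $A_k$ with nodes $1,\dots,k$ (consecutive nodes joined by simple edges) and $X_2$, by adding simple edges $\xi_1$—$1$ and $k$—$\xi_2$. For the Kac–Moody algebra $\mathfrak g(Z_k)$ with $\det Z_k\ne0$: $\omega_p$ are the fundamental weights ($\omega_p(\check\alpha_q)=\delta_{pq}$), $P(Z_k)=\bigoplus\mathbb Z\omega_p$ is the weight lattice and $Q(Z_k)=\bigoplus\mathbb Z\alpha_p$ the root lattice. *)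

(* Defs.v *)
From HB Require Import structures.
From mathcomp Require Import all_boot all_order all_algebra.
Set Implicit Arguments. Unset Strict Implicit. Unset Printing Implicit Defensive.
Import Order.TTheory GRing.Theory Num.Theory.
Local Open Scope ring_scope.

Definition is_GCM n (A : 'M[int]_n) : Prop :=
  (forall i, A i i = 2) /\
  (forall i j, i != j -> A i j <= 0) /\
  (forall i j, A i j = 0 <-> A j i = 0).

Definition symmetrizable n (A : 'M[int]_n) : Prop :=
  exists d : 'I_n -> rat, (forall i, 0 < d i) /\
    forall i j, d i * (A i j)%:~R = d j * (A j i)%:~R.

Definition is_symm_GCM n (A : 'M[int]_n) : Prop := is_GCM A /\ symmetrizable A.

(* A marked diagram (X, xi) is given by its Cartan matrix A and node xi. *)
(* det X(-1): determinant of A with row and column xi deleted (empty det = 1). *)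
Definition detm1 n (A : 'M[int]_n) (xi : 'I_n) : int := \det (row' xi (col' xi A)).

Definition Delta n (A : 'M[int]_n) (xi : 'I_n) : int := \det A - detm1 A xi.

Definition extensible_pair n1 n2 (A1 : 'M[int]_n1) (xi1 : 'I_n1)
    (A2 : 'M[int]_n2) (xi2 : 'I_n2) : Prop :=
  [/\ \det A1 != 0, Delta A1 xi1 != 0 & coprimez (\det A1) (Delta A1 xi1)] /\
  [/\ \det A2 != 0, Delta A2 xi2 != 0 & coprimez (\det A2) (Delta A2 xi2)] /\
  coprimez (Delta A1 xi1) (Delta A2 xi2).

(* Cartan matrix of the path A_k; node i (1-based) is index i-1. *)
Definition cartanA k : 'M[int]_k :=
  \matrix_(i, j) (if i == j then 2
                  else if (i.+1 == j :> nat) || (j.+1 == i :> nat) then -1 else 0).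

(* Edge xi1 -- 1 (first node of A_k, index 0). *)
Definition edge1 n1 k (xi1 : 'I_n1) : 'M[int]_(n1, k) :=
  \matrix_(i, j) (if (i == xi1) && (j == 0%N :> nat) then -1 else 0).

(* Edge k -- xi2, inside the block (X1 + A_k) x X2; node k has index n1+k-1. *)
Definition edge2 n1 k n2 (xi2 : 'I_n2) : 'M[int]_(n1 + k, n2) :=
  \matrix_(i, j) (if (i == (n1 + k).-1 :> nat) && (j == xi2) then -1 else 0).

(* Cartan matrix of Z_k(X1,X2); nodes: X1 (indices < n1), then A_k
   (indices n1 .. n1+k-1), then X2 (indices n1+k+j). *)
Definition Zk n1 k n2 (A1 : 'M[int]_n1) (xi1 : 'I_n1)
    (A2 : 'M[int]_n2) (xi2 : 'I_n2) : 'M[int]_(n1 + k + n2) :=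
  block_mx (block_mx A1 (edge1 k xi1) (edge1 k xi1)^T (cartanA k))
           (edge2 n1 k xi2) (edge2 n1 k xi2)^T A2.

Definition in_Bk n1 k n2 (xi1 : 'I_n1) (xi2 : 'I_n2) (u : 'I_(n1 + k + n2)) : bool :=
  [|| (n1 <= u < n1 + k)%N, (u == xi1 :> nat) | (u == n1 + k + xi2 :> nat)%N].

(* Weight lattice P = Z^n in the basis of fundamental weights omega_p;
   simple root alpha_q = sum_p a_{pq} omega_p, i.e. column q of A. *)
Definition omega n (p : 'I_n) : 'cV[int]_n := delta_mx p 0.
Definition alpha n (A : 'M[int]_n) (q : 'I_n) : 'cV[int]_n := col q A.

Definition in_root_lattice n (A : 'M[int]_n) (w : 'cV[int]_n) : Prop :=
  exists c : 'I_n -> int, w = \sum_q c q *: alpha A q.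

Definition generates_PQ n (A : 'M[int]_n) (g : 'cV[int]_n) : Prop :=
  forall w : 'cV[int]_n, exists m : int, in_root_lattice A (w - m *: g).

Definition PQ_cyclic n (A : 'M[int]_n) : Prop := exists g, generates_PQ A g.

(* Main.v *)
Require Import Defs.
From mathcomp Require Import all_boot all_order all_algebra.
From mathcomp Require Import zify ring lra.
Set Implicit Arguments. Unset Strict Implicit. Unset Printing Implicit Defensive.
Import Order.TTheory GRing.Theory Num.Theory.
Local Open Scope ring_scope.

Lemma sign_nn (n : nat) : (-1) ^+ (n + n) = 1 :> int.
Proof. by rewrite exprD -expr2 sqrr_sign. Qed.

Lemma det_subdelta n (A : 'M[int]_n) (i : 'I_n) :
  \det (A - delta_mx i i) = Delta A i.
Proof.
rewrite /Delta /detm1 (expand_det_row _ i) (expand_det_row A i).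
have cofE j : cofactor (A - delta_mx i i) i j = cofactor A i j.
  rewrite /cofactor; congr (_ * \det _); apply/matrixP => a b; rewrite !mxE.
  by rewrite eq_sym (negbTE (neq_lift i a)) /= subr0.
under eq_bigr => j _ do rewrite cofE !mxE eqxx /= mulrBl.
rewrite sumrB; congr (_ - _).
rewrite (bigD1 i) //= big1 ?addr0; last first.
  by move=> j /negbTE ->; rewrite mul0r.
by rewrite eqxx mul1r /cofactor sign_nn mul1r.
Qed.

Lemma delta_lshift m n (i : 'I_m) :
  delta_mx (lshift n i) 0 = col_mx (delta_mx i 0) 0 :> 'cV[int]_(m + n).
Proof.
apply/matrixP => a b; rewrite -[a]splitK; case: (split a) => a' /=.
  by rewrite col_mxEu !mxE (inj_eq (@lshift_inj _ _)).
rewrite col_mxEd !mxE; case: eqP => // /(congr1 val) /= H.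
have := ltn_ord i; lia.
Qed.

Lemma delta_rshift m n (i : 'I_n) :
  delta_mx (rshift m i) 0 = col_mx 0 (delta_mx i 0) :> 'cV[int]_(m + n).
Proof.
apply/matrixP => a b; rewrite -[a]splitK; case: (split a) => a' /=.
  rewrite col_mxEu !mxE; case: eqP => // /(congr1 val) /= H.
  have := ltn_ord a'; lia.
by rewrite col_mxEd !mxE (inj_eq (@rshift_inj _ _)).
Qed.

Lemma delta_mulcol m n (i : 'I_m) (j : 'I_n) (y : 'cV[int]_n) :
  delta_mx i j *m y = y j 0 *: delta_mx i 0.
Proof.
apply/matrixP => a b; rewrite !mxE (bigD1 j) //= big1 ?addr0.
  by rewrite !mxE eqxx !andbT (ord1 b) /= ; case: (a == i); rewrite ?mul1r ?mul0r ?mulr1 ?mulr0.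
by move=> l /negbTE H; rewrite mxE H andbF mul0r.
Qed.
Lemma edge1E n1 k (xi1 : 'I_n1) : edge1 k.+1 xi1 = - delta_mx xi1 ord0.
Proof.
apply/matrixP => a b; rewrite !mxE.
have -> : (b == ord0) = (b == 0%N :> nat) by [].
by case: (_ && _).
Qed.
Lemma edge2E n1 k n2 (xi2 : 'I_n2) :
  edge2 n1 k.+1 xi2 = - delta_mx (rshift n1 (@ord_max k)) xi2.
Proof.
apply/matrixP => a b; rewrite !mxE.
have -> : (n1 + k.+1).-1 = n1 + k by rewrite addnS.
have -> : (a == rshift n1 ord_max) = (a == n1 + k :> nat) by [].
by case: (_ && _).
Qed.

Lemma edge1TE n1 k (xi1 : 'I_n1) : (edge1 k.+1 xi1)^T = - delta_mx ord0 xi1.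
Proof. by rewrite edge1E; apply/matrixP => a b; rewrite !mxE andbC. Qed.
Lemma edge2TE n1 k n2 (xi2 : 'I_n2) :
  (edge2 n1 k.+1 xi2)^T = - delta_mx xi2 (rshift n1 (@ord_max k)).
Proof. by rewrite edge2E; apply/matrixP => a b; rewrite !mxE andbC. Qed.

Definition X1n {n1 k n2} (a : 'I_n1) : 'I_(n1+k+n2) := lshift n2 (lshift k a).
Definition Cn {n1 k n2} (t : 'I_k) : 'I_(n1+k+n2) := lshift n2 (rshift n1 t).
Definition X2n {n1 k n2} (j : 'I_n2) : 'I_(n1+k+n2) := rshift (n1+k) j.
Definition I1 {n1 k n2} (x : 'cV[int]_n1) : 'cV[int]_(n1+k+n2) := col_mx (col_mx x 0) 0.
Definition IC {n1 k n2} (x : 'cV[int]_k) : 'cV[int]_(n1+k+n2) := col_mx (col_mx 0 x) 0.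
Definition I2 {n1 k n2} (x : 'cV[int]_n2) : 'cV[int]_(n1+k+n2) := col_mx 0 x.

Lemma omegaX1 n1 k n2 (a : 'I_n1) : omega (X1n a) = I1 (k:=k) (n2:=n2) (delta_mx a 0).
Proof. by rewrite /omega /X1n /I1 !delta_lshift. Qed.
Lemma omegaC n1 k n2 (a : 'I_k) : omega (Cn a) = IC (n1:=n1) (n2:=n2) (delta_mx a 0).
Proof. by rewrite /omega /Cn /IC delta_lshift delta_rshift. Qed.
Lemma omegaX2 n1 k n2 (a : 'I_n2) : omega (X2n a) = I2 (n1:=n1) (k:=k) (delta_mx a 0).
Proof. by rewrite /omega /X2n /I2 delta_rshift. Qed.

Lemma I1B n1 k n2 (x y : 'cV[int]_n1) : I1 (k:=k) (n2:=n2) (x - y) = I1 x - I1 y.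
Proof. by rewrite /I1 opp_col_mx oppr0 add_col_mx opp_col_mx oppr0 add_col_mx !addr0. Qed.
Lemma I1Z n1 k n2 (a : int) (x : 'cV[int]_n1) : I1 (k:=k) (n2:=n2) (a *: x) = a *: I1 x.
Proof. by rewrite /I1 !scale_col_mx !scaler0. Qed.
Lemma I2B n1 k n2 (x y : 'cV[int]_n2) : I2 (n1:=n1) (k:=k) (x - y) = I2 x - I2 y.
Proof. by rewrite /I2 opp_col_mx oppr0 add_col_mx addr0. Qed.
Lemma I2Z n1 k n2 (a : int) (x : 'cV[int]_n2) : I2 (n1:=n1) (k:=k) (a *: x) = a *: I2 x.
Proof. by rewrite /I2 !scale_col_mx !scaler0. Qed.
Lemma ICD n1 k n2 (x y : 'cV[int]_k) : IC (n1:=n1) (n2:=n2) (x + y) = IC x + IC y.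
Proof. by rewrite /IC !add_col_mx !addr0. Qed.
Lemma ICZ n1 k n2 (a : int) (x : 'cV[int]_k) : IC (n1:=n1) (n2:=n2) (a *: x) = a *: IC x.
Proof. by rewrite /IC !scale_col_mx !scaler0. Qed.

Lemma ZmulE n1 k n2 (A1 : 'M[int]_n1) (xi1 : 'I_n1) (A2 : 'M[int]_n2) (xi2 : 'I_n2)
  (x : 'cV[int]_n1) (c : 'cV[int]_k) (z : 'cV[int]_n2) :
  Zk k A1 xi1 A2 xi2 *m col_mx (col_mx x c) z =
  col_mx (col_mx (A1 *m x + edge1 k xi1 *m c) ((edge1 k xi1)^T *m x + cartanA k *m c)
            + edge2 n1 k xi2 *m z)
         ((edge2 n1 k xi2)^T *m col_mx x c + A2 *m z).
Proof. by rewrite /Zk !mul_block_col. Qed.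

Lemma ZI1 n1 k n2 (A1 : 'M[int]_n1) (xi1 : 'I_n1) (A2 : 'M[int]_n2) (xi2 : 'I_n2) (y : 'cV[int]_n1) :
  Zk k.+1 A1 xi1 A2 xi2 *m I1 y = I1 (A1 *m y) - y xi1 0 *: omega (Cn ord0).
Proof.
rewrite omegaC /I1 /IC ZmulE edge1TE edge2TE !mulmx0 !addr0.
rewrite !mulNmx !delta_mulcol col_mxEd mxE /= scale0r oppr0.
by rewrite !scale_col_mx !scaler0 opp_col_mx oppr0 add_col_mx opp_col_mx oppr0 add_col_mx !addr0 !add0r.
Qed.

Lemma ZI2 n1 k n2 (A1 : 'M[int]_n1) (xi1 : 'I_n1) (A2 : 'M[int]_n2) (xi2 : 'I_n2) (z : 'cV[int]_n2) :
  Zk k.+1 A1 xi1 A2 xi2 *m I2 z = I2 (A2 *m z) - z xi2 0 *: omega (Cn ord_max).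
Proof.
rewrite omegaC /I2 /IC -[0 : 'cV_(n1 + k.+1)]col_mx0 ZmulE edge1E edge2E !mulmx0 !addr0.
rewrite !mulNmx !delta_mulcol delta_rshift !col_mx0 mulmx0 !add0r.
by rewrite !scale_col_mx !scaler0 !opp_col_mx !oppr0 add_col_mx add0r addr0.
Qed.

Definition pos n1 k n2 (xi1 : 'I_n1) (xi2 : 'I_n2) (j : nat) : nat :=
  if j == 0 then val xi1 else if (j <= k)%N then n1 + j.-1 else n1 + k + val xi2.
Definition cv n1 k n2 (xi1 : 'I_n1) (xi2 : 'I_n2) (j : nat) : 'cV[int]_(n1+k+n2) :=
  \col_i ((val i == pos k xi1 xi2 j)%:R).

Lemma omega_cv n1 k n2 (xi1 : 'I_n1) (xi2 : 'I_n2) (p : 'I_(n1+k+n2)) j :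
  val p = pos k xi1 xi2 j -> omega p = cv k xi1 xi2 j.
Proof.
move=> H; apply/matrixP => a b; rewrite !mxE (ord1 b) eqxx andbT -H.
by [].
Qed.

Lemma idx3 n1 k n2 (i : 'I_(n1+k+n2)) :
  [\/ exists a, i = X1n a, exists t, i = Cn t | exists j, i = X2n j].
Proof.
rewrite -[i]splitK; case: (split i) => [i'|j] /=; last by apply: Or33; exists j.
rewrite -[i']splitK; case: (split i') => [a|t] /=.
  by apply: Or31; exists a.
by apply: Or32; exists t.
Qed.


Lemma ZX1C n1 k n2 (A1 : 'M[int]_n1) (xi1 : 'I_n1) (A2 : 'M[int]_n2) (xi2 : 'I_n2) a t :
  Zk k A1 xi1 A2 xi2 (X1n a) (Cn t) = edge1 k xi1 a t.
Proof. by rewrite /Zk /X1n /Cn block_mxEul block_mxEur. Qed.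
Lemma ZCC n1 k n2 (A1 : 'M[int]_n1) (xi1 : 'I_n1) (A2 : 'M[int]_n2) (xi2 : 'I_n2) t s :
  Zk k A1 xi1 A2 xi2 (Cn t) (Cn s) = cartanA k t s.
Proof. by rewrite /Zk /Cn block_mxEul block_mxEdr. Qed.
Lemma ZX2C n1 k n2 (A1 : 'M[int]_n1) (xi1 : 'I_n1) (A2 : 'M[int]_n2) (xi2 : 'I_n2) j t :
  Zk k A1 xi1 A2 xi2 (X2n j) (Cn t) = edge2 n1 k xi2 (rshift n1 t) j.
Proof. by rewrite /Zk /X2n /Cn block_mxEdl mxE. Qed.
Lemma ZCX1 n1 k n2 (A1 : 'M[int]_n1) (xi1 : 'I_n1) (A2 : 'M[int]_n2) (xi2 : 'I_n2) t a :
  Zk k A1 xi1 A2 xi2 (Cn t) (X1n a) = edge1 k xi1 a t.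
Proof. by rewrite /Zk /X1n /Cn block_mxEul block_mxEdl mxE. Qed.
Lemma ZCX2 n1 k n2 (A1 : 'M[int]_n1) (xi1 : 'I_n1) (A2 : 'M[int]_n2) (xi2 : 'I_n2) t j :
  Zk k A1 xi1 A2 xi2 (Cn t) (X2n j) = edge2 n1 k xi2 (rshift n1 t) j.
Proof. by rewrite /Zk /X2n /Cn block_mxEur. Qed.
Lemma ZX1X2 n1 k n2 (A1 : 'M[int]_n1) (xi1 : 'I_n1) (A2 : 'M[int]_n2) (xi2 : 'I_n2) a j :
  Zk k A1 xi1 A2 xi2 (X1n a) (X2n j) = edge2 n1 k xi2 (lshift k a) j.
Proof. by rewrite /Zk /X2n /X1n block_mxEur. Qed.
Lemma ZX2X1 n1 k n2 (A1 : 'M[int]_n1) (xi1 : 'I_n1) (A2 : 'M[int]_n2) (xi2 : 'I_n2) j a :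
  Zk k A1 xi1 A2 xi2 (X2n j) (X1n a) = edge2 n1 k xi2 (lshift k a) j.
Proof. by rewrite /Zk /X2n /X1n block_mxEdl mxE. Qed.

Ltac add_bounds := repeat match goal with
  | x : 'I_?n |- _ => lazymatch goal with
      | H : is_true (nat_of_ord x < n)%N |- _ => fail
      | _ => have := ltn_ord x; move=> ? end
  end.
Ltac crunch := add_bounds; rewrite -?(inj_eq val_inj) /=;
  repeat (case: ifP => ? /=); repeat (case: eqP => ? /=); try (exfalso; lia); try lia.

Lemma colEntry m n (A : 'M[int]_(m, n)) j i : col j A i 0 = A i j.
Proof. by rewrite mxE. Qed.

Lemma chain_col n1 k n2 (A1 : 'M[int]_n1) (xi1 : 'I_n1) (A2 : 'M[int]_n2) (xi2 : 'I_n2)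
   (t : nat) : (t < k.+1)%N ->
  Zk k.+1 A1 xi1 A2 xi2 *m cv k.+1 xi1 xi2 t.+1 =
  cv k.+1 xi1 xi2 t.+1 + cv k.+1 xi1 xi2 t.+1 - cv k.+1 xi1 xi2 t - cv k.+1 xi1 xi2 t.+2.
Proof.
move=> ht.
have -> : cv k.+1 xi1 xi2 t.+1 = omega (Cn (Ordinal ht)).
  by apply/esym/omega_cv; rewrite /pos /= ht.
rewrite [omega _ in LHS]/omega -colE; apply/matrixP => i b; rewrite (ord1 b) colEntry.
case: (idx3 i) => [[a ->]|[s ->]|[j ->]];
  rewrite ?ZX1C ?ZCC ?ZX2C /omega /cv !mxE /pos /X1n /Cn /X2n /= ?eqxx ?andbT.
all: crunch.
Qed.

Definition inS N (M : 'M[int]_N) (g h w : 'cV[int]_N) :=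
  exists a b (y : 'cV[int]_N), w = M *m y + a *: g + b *: h.

Lemma inS_add N (M : 'M[int]_N) g h w1 w2 : inS M g h w1 -> inS M g h w2 -> inS M g h (w1 + w2).
Proof.
move=> [a1 [b1 [y1 ->]]] [a2 [b2 [y2 ->]]]; exists (a1 + a2), (b1 + b2), (y1 + y2).
by rewrite mulmxDr !scalerDl addrACA [in LHS](addrACA (M *m y1)).
Qed.
Lemma inS_opp N (M : 'M[int]_N) g h w : inS M g h w -> inS M g h (- w).
Proof.
move=> [a [b [y ->]]]; exists (- a), (- b), (- y).
by rewrite mulmxN !scaleNr !opprD.
Qed.
Lemma inS_scale N (M : 'M[int]_N) g h w c : inS M g h w -> inS M g h (c *: w).
Proof.
move=> [a [b [y ->]]]; exists (c * a), (c * b), (c *: y).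
by rewrite !scalerDr !scalerA scalemxAr.
Qed.
Lemma inS_sub N (M : 'M[int]_N) g h w1 w2 : inS M g h w1 -> inS M g h w2 -> inS M g h (w1 - w2).
Proof. by move=> H1 H2; apply: inS_add => //; apply: inS_opp. Qed.
Lemma inS_M N (M : 'M[int]_N) g h y : inS M g h (M *m y).
Proof. by exists 0, 0, y; rewrite !scale0r !addr0. Qed.
Lemma inS_0 N (M : 'M[int]_N) g h : inS M g h 0.
Proof. by exists 0, 0, 0; rewrite !scale0r !addr0 mulmx0. Qed.
Lemma inS_g N (M : 'M[int]_N) g h : inS M g h g.
Proof. by exists 1, 0, 0; rewrite mulmx0 scale0r scale1r add0r addr0. Qed.
Lemma inS_h N (M : 'M[int]_N) g h : inS M g h h.
Proof. by exists 0, 1, 0; rewrite mulmx0 scale0r scale1r !add0r. Qed.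
Lemma inS_trans N (M : 'M[int]_N) g h g' h' w :
  inS M g' h' g -> inS M g' h' h -> inS M g h w -> inS M g' h' w.
Proof.
move=> Hg Hh [a [b [y ->]]].
by apply: inS_add; [apply: inS_add|]; [apply: inS_M| apply: inS_scale..].
Qed.
Lemma inS_sum N (M : 'M[int]_N) g h I (r : seq I) (P : pred I) (F : I -> 'cV[int]_N) :
  (forall i, P i -> inS M g h (F i)) -> inS M g h (\sum_(i <- r | P i) F i).
Proof.
move=> H; apply: (big_ind (inS M g h)) => //; [exact: inS_0 | exact: inS_add].
Qed.
Lemma inS_coprime N (M : 'M[int]_N) g h w (p q : int) :
  coprimez p q -> inS M g h (p *: w) -> inS M g h (q *: w) -> inS M g h w.
Proof.
move=> /coprimezP [[u v] /= Huv] Hp Hq.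
have -> : w = u *: (p *: w) + v *: (q *: w) by rewrite !scalerA -scalerDl Huv scale1r.
by apply: inS_add; apply: inS_scale.
Qed.
Lemma inR_root N (M : 'M[int]_N) w : inS M 0 0 w -> in_root_lattice M w.
Proof.
move=> [a [b [y ->]]]; rewrite !scaler0 !addr0.
exists (fun q => y q 0); rewrite -[M *m y]/(M *m y).
rewrite [y in LHS]matrix_sum_delta /=.
by rewrite mulmx_sumr; apply: eq_bigr => q _; rewrite big_ord1 -scalemxAr /alpha colE.
Qed.

Lemma chain_id N (x0 x1 x2 e d : 'cV[int]_N) (c : int) :
  x2 - e - (c + 2) *: d =
  (x1 - e - (c + 1) *: d) + (x1 - e - (c + 1) *: d) - (x0 - e - c *: d)
  - (x1 + x1 - x0 - x2).
Proof. by apply/matrixP => a b; rewrite !mxE; ring. Qed.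

Lemma chain_R n1 k n2 (A1 : 'M[int]_n1) (xi1 : 'I_n1) (A2 : 'M[int]_n2) (xi2 : 'I_n2) j :
  (j <= k.+2)%N ->
  inS (Zk k.+1 A1 xi1 A2 xi2) 0 0
    (cv k.+1 xi1 xi2 j - cv k.+1 xi1 xi2 0
       - (j%:R : int) *: (cv k.+1 xi1 xi2 1 - cv k.+1 xi1 xi2 0)).
Proof.
set Z := Zk _ _ _ _ _; set c := cv k.+1 xi1 xi2.
suff H : forall i, (i <= k.+1)%N -> inS Z 0 0 (c i - c 0 - (i%:R : int) *: (c 1 - c 0)) /\
   inS Z 0 0 (c i.+1 - c 0 - (i.+1%:R : int) *: (c 1 - c 0)).
  move=> hj; case: j hj => [|j] hj; first by case: (H 0%N isT).
  by case: (H j hj).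
clear j; elim=> [|j IH] hj.
  by rewrite !scale0r !scale1r !subr0 !subrr; split; apply: inS_0.
have [H0 H1] := IH (ltnW hj); split => //.
have hc := chain_col A1 xi1 A2 xi2 hj.
rewrite -[c j.+2]/(cv k.+1 xi1 xi2 j.+2).
have -> : (j.+2%:R : int) = j%:R + 2 by rewrite -addn2 natrD.
rewrite (chain_id (c j) (c j.+1)) -/c -hc.
rewrite -natr1 in H1.
by apply: inS_sub; [apply: inS_sub; [apply: inS_add|]|] => //; apply: inS_M.
Qed.

Lemma step_id N (x0 x1 e d : 'cV[int]_N) (c : int) :
  x1 - x0 - d = (x1 - e - (c + 1) *: d) - (x0 - e - c *: d).
Proof. by apply/matrixP => a b; rewrite !mxE; ring. Qed.

Lemma step_R n1 k n2 (A1 : 'M[int]_n1) (xi1 : 'I_n1) (A2 : 'M[int]_n2) (xi2 : 'I_n2) j :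
  (j <= k.+1)%N ->
  inS (Zk k.+1 A1 xi1 A2 xi2) 0 0
    (cv k.+1 xi1 xi2 j.+1 - cv k.+1 xi1 xi2 j - (cv k.+1 xi1 xi2 1 - cv k.+1 xi1 xi2 0)).
Proof.
move=> hj; rewrite (step_id _ _ (cv k.+1 xi1 xi2 0) _ (j%:R)) natr1.
by apply: inS_sub; apply: chain_R; lia.
Qed.

Lemma scale_sub_id N (u v w : 'cV[int]_N) (s : int) : u - s *: v = u - s *: w + s *: (w - v).
Proof. by rewrite scalerBr addrA subrK. Qed.

Lemma colsplit n1 k n2 (w : 'cV[int]_(n1 + k + n2)) :
  w = I1 (usubmx (usubmx w)) + IC (dsubmx (usubmx w)) + I2 (dsubmx w).
Proof.
by rewrite /I1 /IC /I2 !add_col_mx !addr0 !add0r !vsubmxK.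
Qed.

Lemma part1 n1 k n2 (A1 : 'M[int]_n1) (xi1 : 'I_n1) (A2 : 'M[int]_n2) (xi2 : 'I_n2) :
  coprimez (\det A1) (Delta A1 xi1) -> coprimez (\det A2) (Delta A2 xi2) ->
  coprimez (Delta A1 xi1) (Delta A2 xi2) ->
  forall w, inS (Zk k.+1 A1 xi1 A2 xi2) (cv k.+1 xi1 xi2 1 - cv k.+1 xi1 xi2 0) 0 w.
Proof.
move=> cop1 cop2 cop12.
set Z := Zk _ _ _ _ _; set c := cv k.+1 xi1 xi2; set d := c 1 - c 0.
have om0 : omega (X1n xi1) = c 0 by apply: omega_cv.
have om1 : omega (Cn (@ord0 k)) = c 1 by apply: omega_cv; rewrite /= /pos /=.
have omk : omega (Cn (@ord_max k)) = c k.+1 by apply: omega_cv; rewrite /= /pos /= leqnn.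
have omk2 : omega (X2n xi2) = c k.+2 by apply: omega_cv; rewrite /= /pos /= ltnn.
have omC (t : 'I_k.+1) : omega (Cn t) = c t.+1.
  by apply: omega_cv; rewrite /= /pos /= ltn_ord.
have R2S g h w : inS Z 0 0 w -> inS Z g h w.
  by apply: inS_trans; rewrite -(scale0r 0); apply: inS_scale; apply: inS_0.
have cS j : (j <= k.+2)%N -> inS Z d (c 0) (c j).
  move=> hj; have := R2S d (c 0) _ (chain_R A1 xi1 A2 xi2 hj) => H.
  have -> : c j = (c j - c 0 - (j%:R : int) *: d) + (j%:R : int) *: d + c 0 by rewrite !subrK.
  by apply: inS_add; [apply: inS_add|] => //; [apply: inS_scale; apply: inS_g|apply: inS_h].
have G1 x : inS Z d 0 (Delta A1 xi1 *: I1 x).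
  set A1' := A1 - delta_mx xi1 xi1; set y := \adj A1' *m x.
  have E : Delta A1 xi1 *: I1 x = Z *m I1 y + y xi1 0 *: d.
    rewrite ZI1 -det_subdelta -I1Z -mul_scalar_mx -mul_mx_adj -mulmxA -/y.
    rewrite mulmxBl delta_mulcol I1B I1Z -omegaX1 om0 om1.
    exact: scale_sub_id.
  by rewrite E; apply: inS_add; [apply: inS_M|apply: inS_scale; apply: inS_g].
have G2 x : inS Z d (c 0) (\det A1 *: I1 x).
  set y := \adj A1 *m x.
  have E : \det A1 *: I1 x = Z *m I1 y + y xi1 0 *: c 1.
    by rewrite ZI1 -I1Z -mul_scalar_mx -mul_mx_adj -mulmxA -/y om1 subrK.
  by rewrite E; apply: inS_add; [apply: inS_M|apply: inS_scale; apply: cS].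
have dS : inS Z d 0 (c k.+2 - c k.+1).
  have H := R2S d 0 _ (step_R A1 xi1 A2 xi2 (leqnn k.+1)).
  have -> : c k.+2 - c k.+1 = (c k.+2 - c k.+1 - d) + d by rewrite subrK.
  by apply: inS_add => //; apply: inS_g.
have G3 x : inS Z d 0 (Delta A2 xi2 *: I2 x).
  set A2' := A2 - delta_mx xi2 xi2; set y := \adj A2' *m x.
  have E : Delta A2 xi2 *: I2 x = Z *m I2 y - y xi2 0 *: (c k.+2 - c k.+1).
    rewrite ZI2 -det_subdelta -I2Z -mul_scalar_mx -mul_mx_adj -mulmxA -/y.
    rewrite mulmxBl delta_mulcol I2B I2Z -omegaX2 omk2 omk.
    by rewrite scalerBr opprB addrA subrK.
  by rewrite E; apply: inS_sub; [apply: inS_M|apply: inS_scale].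
have G3' x : inS Z d (c 0) (\det A2 *: I2 x).
  set y := \adj A2 *m x.
  have E : \det A2 *: I2 x = Z *m I2 y + y xi2 0 *: c k.+1.
    by rewrite ZI2 -I2Z -mul_scalar_mx -mul_mx_adj -mulmxA -/y omk subrK.
  by rewrite E; apply: inS_add; [apply: inS_M|apply: inS_scale; apply: cS].
have e1S : inS Z d 0 (c 0).
  have H1 : inS Z d 0 (Delta A1 xi1 *: c 0) by rewrite -om0 omegaX1; apply: G1.
  have H2 : inS Z d 0 (Delta A2 xi2 *: c k.+2) by rewrite -omk2 omegaX2; apply: G3.
  have H3 : inS Z d 0 (c k.+2 - c 0).
    have H := R2S d 0 _ (chain_R A1 xi1 A2 xi2 (leqnn k.+2)).
    have -> : c k.+2 - c 0 = (c k.+2 - c 0 - (k.+2%:R : int) *: d) + (k.+2%:R : int) *: d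
      by rewrite subrK.
    by apply: inS_add => //; apply: inS_scale; apply: inS_g.
  apply: (inS_coprime cop12 H1).
  have -> : Delta A2 xi2 *: c 0 = Delta A2 xi2 *: c k.+2 - Delta A2 xi2 *: (c k.+2 - c 0)
    by rewrite scalerBr opprB addrC subrK.
  by apply: inS_sub => //; apply: inS_scale.
have SS : forall w, inS Z d (c 0) w -> inS Z d 0 w.
  by move=> w; apply: inS_trans => //; apply: inS_g.
have I1S x : inS Z d 0 (I1 x).
  by apply: (inS_coprime cop1); [apply: SS; apply: G2|apply: G1].
have I2S x : inS Z d 0 (I2 x).
  by apply: (inS_coprime cop2); [apply: SS; apply: G3'|apply: G3].
have ICS x : inS Z d 0 (IC x).
  rewrite [x]matrix_sum_delta (big_morph _ (@ICD n1 k.+1 n2) (_ : IC 0 = 0)); last first.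
    by rewrite /IC !col_mx0.
  apply: inS_sum => t _; rewrite big_ord1 ICZ -omegaC omC.
  by apply: inS_scale; apply: SS; apply: cS; rewrite ltnS ltnW.
by move=> w; rewrite [w]colsplit; apply: inS_add; [apply: inS_add|].
Qed.

Lemma Bk3 n1 k n2 (xi1 : 'I_n1) (xi2 : 'I_n2) (u : 'I_(n1 + k + n2)) :
  in_Bk xi1 xi2 u -> [\/ u = X1n xi1, exists t, u = Cn t | u = X2n xi2].
Proof.
case/or3P => [/andP [h1 h2] | /eqP h | /eqP h].
- have ht : (u - n1 < k)%N by lia.
  by apply: Or32; exists (Ordinal ht); apply: val_inj; rewrite /= subnKC.
- by apply: Or31; apply: val_inj.
- by apply: Or33; apply: val_inj.
Qed.

Lemma Zadj n1 k n2 (A1 : 'M[int]_n1) (xi1 : 'I_n1) (A2 : 'M[int]_n2) (xi2 : 'I_n2)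
   (u v : 'I_(n1 + k.+1 + n2)) :
  u != v -> Zk k.+1 A1 xi1 A2 xi2 u v != 0 -> in_Bk xi1 xi2 u -> in_Bk xi1 xi2 v ->
  exists a b, [/\ omega u = cv k.+1 xi1 xi2 a, omega v = cv k.+1 xi1 xi2 b,
     (a <= k.+2)%N, (b <= k.+2)%N & (a = b.+1 \/ b = a.+1)].
Proof.
move=> Huv Hz /Bk3 Hu /Bk3 Hv.
have om0 : omega (X1n xi1 : 'I_(n1 + k.+1 + n2)) = cv k.+1 xi1 xi2 0 by apply: omega_cv.
have omk2 : omega (X2n xi2 : 'I_(n1 + k.+1 + n2)) = cv k.+1 xi1 xi2 k.+2.
  by apply: omega_cv; rewrite /= /pos /= ltnn.
have omC (t : 'I_k.+1) : omega (Cn t : 'I_(n1 + k.+1 + n2)) = cv k.+1 xi1 xi2 t.+1.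
  by apply: omega_cv; rewrite /= /pos /= ltn_ord.
move: Huv Hz.
case: Hu => [->|[s ->]|->]; case: Hv => [->|[t ->]|->];
  rewrite ?om0 ?omk2 ?omC;
  rewrite ?ZX1C ?ZCC ?ZX2C ?ZCX1 ?ZCX2 ?ZX1X2 ?ZX2X1 ?eqxx //;
  move=> Huv Hz; (do 2 eexists); (split; [reflexivity|reflexivity|..]);
  move: Huv Hz; rewrite ?mxE -?(inj_eq val_inj) /=; add_bounds;
  repeat (case: ifP => ? /=); try lia.
Qed.

Lemma root_inS N (M : 'M[int]_N) w : in_root_lattice M w -> inS M 0 0 w.
Proof.
move=> [cf ->]; exists 0, 0, (\col_q cf q).
rewrite !scaler0 !addr0 [X in M *m X]matrix_sum_delta mulmx_sumr.
apply: eq_bigr => q _; rewrite big_ord1 -scalemxAr /alpha colE mxE.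
by [].
Qed.

Lemma gen_from N (M : 'M[int]_N) d g :
  generates_PQ M d -> inS M 0 0 (g - d) \/ inS M 0 0 (d + g) -> generates_PQ M g.
Proof.
move=> Hd Hg w; have [m /root_inS Hm] := Hd w.
case: Hg => Hg.
  exists m; apply: inR_root.
  have -> : w - m *: g = (w - m *: d) - m *: (g - d) by rewrite scalerBr opprB addrA subrK.
  by apply: inS_sub => //; apply: inS_scale.
exists (- m); apply: inR_root.
have -> : w - (- m) *: g = (w - m *: d) + m *: (d + g).
  by apply/matrixP => a b; rewrite !mxE; ring.
by apply: inS_add => //; apply: inS_scale.
Qed.

Theorem lemma3p11 (n1 n2 k : nat) (A1 : 'M[int]_n1) (xi1 : 'I_n1)
    (A2 : 'M[int]_n2) (xi2 : 'I_n2) :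
  is_symm_GCM A1 -> is_symm_GCM A2 ->
  extensible_pair A1 xi1 A2 xi2 ->
  (1 <= k)%N ->
  \det (Zk k A1 xi1 A2 xi2) != 0 ->
  PQ_cyclic (Zk k A1 xi1 A2 xi2) /\
  (forall u v : 'I_(n1 + k + n2),
      u != v -> Zk k A1 xi1 A2 xi2 u v != 0 ->
      in_Bk xi1 xi2 u -> in_Bk xi1 xi2 v ->
      generates_PQ (Zk k A1 xi1 A2 xi2) (omega u - omega v)).
Proof.
move=> _ _ [[_ _ cop1] [[_ _ cop2] cop12]].
case: k => [//|k] _ _.
set Z := Zk _ _ _ _ _; set c := cv k.+1 xi1 xi2.
have gd : generates_PQ Z (c 1 - c 0).
  move=> w; have [a [b [y ->]]] := part1 cop1 cop2 cop12 w.
  exists a; apply: inR_root; exists 0, 0, y.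
  by rewrite !scaler0 !addr0 addrK.
split; first by exists (c 1 - c 0).
move=> u v Huv Hz Hu Hv.
have [a [b [-> -> ha hb hab]]] := Zadj Huv Hz Hu Hv.
apply: (gen_from gd).
case: hab => ?; subst.
  left; apply: step_R; lia.
right; have -> : c 1 - c 0 + (c a - c a.+1) = - (c a.+1 - c a - (c 1 - c 0)).
  by apply/matrixP => i j; rewrite !mxE; ring.
by apply: inS_opp; apply: step_R; lia.
Qed.
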